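(* Let $\mu>0$, $u_a\in\mathbb{R}$, $\alpha_\pm>0$, $u_->u_+$, with Riemann data $(\alpha_0,u_0)=(\alpha_-,u_-)$ for $x<0$, $(\alpha_+,u_+)$ for $x>0$. Let $u_l(t)=u_a+(u_--u_a)e^{-\mu t}$, $u_r(t)=u_a+(u_+-u_a)e^{-\mu t}$, $\alpha_l\equiv\alpha_-$, $\alpha_r\equiv\alpha_+$. Let $(\omega,\sigma)\in\mathcal{C}^1([0,\infty))^2$ be a solution of the generalized Rankine–Hugoniot conditions $$\frac{d\omega}{dt}=(\alpha_r-\alpha_l)\sigma-(\alpha_ru_r-\alpha_lu_l),\quad \frac{d(\omega\sigma)}{dt}=(\alpha_ru_r-\alpha_lu_l)\sigma-(\alpha_ru_r^2-\alpha_lu_l^2)+\mu(u_a-\sigma)\omega,$$ with $\omega(0)=0$, satisfying $u_r(t)<\sigma(t)<u_l(t)$ for all $t\ge0$, and let $\xi(t)=\int_0^t\sigma(s)ds$. Then $\alpha=\alpha^0+\omega(t)\delta(x-\xi(t))$, $u=u^0$, with $(\alpha^0,u^0)=(\alpha_-,u_l(t))$ for $x<\xi(t)$ and $(\alpha_+,u_r(t))$ for $x>\xi(t)$, is a $\delta$-shock solution (weak solution satisfying Lax's entropy condition) of the Eulerian droplet model with these Riemann data.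
   Context: The Eulerian droplet model: $\partial_t\alpha+\partial_x(\alpha u)=0$, $\partial_t(\alpha u)+\partial_x(\alpha u^2)=\mu\alpha(u_a-u)$. For $\psi\in\mathcal{C}_0^\infty(\mathbb{R}\times[0,\infty))$: $\langle\alpha,\psi\rangle=\int_0^\infty\int\alpha^0\psi+\int_0^\infty\omega\psi(\xi(t),t)dt$, $\langle\alpha u,\psi\rangle=\int_0^\infty\int\alpha^0u^0\psi+\int_0^\infty\omega\xi'\psi(\xi(t),t)dt$, $\langle\alpha u^2,\psi\rangle=\int_0^\infty\int\alpha^0(u^0)^2\psi+\int_0^\infty\sigma\omega\xi'\psi(\xi(t),t)dt$, $\langle\alpha(u_a-u),\psi\rangle=\int_0^\infty\int\alpha^0(u_a-u^0)\psi+\int_0^\infty(u_a-\sigma)\omega\psi(\xi(t),t)dt$. Weak solution with $\omega_0=0$: for all such $\psi$, $\langle\alpha,\psi_t\rangle+\langle\alpha u,\psi_x\rangle=-\int\alpha_0\psi(x,0)dx$ and $\langle\alpha u,\psi_t\rangle+\langle\alpha u^2,\psi_x\rangle+\mu\langle\alpha(u_a-u),\psi\rangle=-\int\alpha_0u_0\psi(x,0)dx$. *)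

(* Defs.v *)
From Stdlib Require Import Reals Lra.
Open Scope R_scope.

Definition RInt_rel (f : R -> R) (a b v : R) : Prop :=
  exists pr : Riemann_integrable f a b, RiemannInt pr = v.

(** Integral over the whole line, for (eventually) compactly supported f:
    the integrals over [-M,M] are equal to [v] for all large M. *)
Definition IntR (f : R -> R) (v : R) : Prop :=
  exists L, forall M, L <= M -> RInt_rel f (- M) M v.

Definition Int0inf (g : R -> R) (v : R) : Prop :=
  exists T, 0 <= T /\ forall S, T <= S -> RInt_rel g 0 S v.

Definition DInt (F : R -> R -> R) (v : R) : Prop :=
  exists I : R -> R,
    (forall t, 0 <= t -> IntR (fun x => F x t) (I t)) /\ Int0inf I v.

(** * Test functions C_0^oo(R x [0,oo)) (restrictions of C_c^oo(R^2)) *)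

Definition cont2 (f : R -> R -> R) : Prop :=
  forall x t eps, 0 < eps -> exists d, 0 < d /\
    forall y s, Rabs (y - x) < d -> Rabs (s - t) < d ->
      Rabs (f y s - f x t) < eps.

Definition partial_x (f fx : R -> R -> R) : Prop :=
  forall x t, derivable_pt_lim (fun y => f y t) x (fx x t).

Definition partial_t (f ft : R -> R -> R) : Prop :=
  forall x t, derivable_pt_lim (fun s => f x s) t (ft x t).

CoInductive smooth2 (f : R -> R -> R) : Prop :=
  smooth2_intro :
    cont2 f ->
    (exists fx, partial_x f fx /\ smooth2 fx) ->
    (exists ft, partial_t f ft /\ smooth2 ft) ->
    smooth2 f.

Definition compact_support2 (f : R -> R -> R) : Prop :=
  exists L, 0 < L /\ forall x t, (L < Rabs x \/ L < Rabs t) -> f x t = 0.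

Definition test_fun (psi : R -> R -> R) : Prop :=
  smooth2 psi /\ compact_support2 psi.

Definition deriv_nonneg (f : R -> R) (t l : R) : Prop :=
  (0 < t -> derivable_pt_lim f t l) /\
  (t = 0 -> forall eps, 0 < eps -> exists d, 0 < d /\
     forall h, 0 < h < d -> Rabs ((f h - f 0) / h - l) < eps).

Definition cont_nonneg (f : R -> R) : Prop :=
  forall t, 0 <= t -> forall eps, 0 < eps -> exists d, 0 < d /\
    forall s, 0 <= s -> Rabs (s - t) < d -> Rabs (f s - f t) < eps.

Definition C1_nonneg (f : R -> R) : Prop :=
  exists f', (forall t, 0 <= t -> deriv_nonneg f t (f' t)) /\ cont_nonneg f'.

(** <a, phi> = int_0^oo int_R a0 phi dx dt + int_0^oo c(t) phi(xi(t),t) dt,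
    where a = a0 + c(t) delta(x - xi(t)). *)
Definition pairing (a0 : R -> R -> R) (c xi : R -> R) (phi : R -> R -> R)
  (v : R) : Prop :=
  exists v1 v2, DInt (fun x t => a0 x t * phi x t) v1 /\
    Int0inf (fun t => c t * phi (xi t) t) v2 /\ v = v1 + v2.

Definition piecewise (xi l r : R -> R) (x t : R) : R :=
  if Rlt_dec x (xi t) then l t else r t.

Definition riemann (vm vp x : R) : R := if Rlt_dec x 0 then vm else vp.

(** Weak solution (with omega(0) = 0) of the droplet model for
    alpha = alpha0 + w delta(x - xi(t)), alpha u = alpha0 u0 + w xi' delta,
    alpha u^2 = alpha0 u0^2 + sigma w xi' delta, sigma = xi',
    with initial data (aI, uI). *)
Definition weak_solution (mu ua : R) (aI uI : R -> R)
  (alpha0 u0 : R -> R -> R) (w xi dxi : R -> R) : Prop :=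
  forall psi psix psit, test_fun psi -> partial_x psi psix ->
    partial_t psi psit ->
    (exists p1 p2 q,
       pairing alpha0 w xi psit p1 /\
       pairing (fun x t => alpha0 x t * u0 x t) (fun t => w t * dxi t) xi psix p2 /\
       IntR (fun x => aI x * psi x 0) q /\
       p1 + p2 = - q) /\
    (exists p1 p2 p3 q,
       pairing (fun x t => alpha0 x t * u0 x t) (fun t => w t * dxi t) xi psit p1 /\
       pairing (fun x t => alpha0 x t * (u0 x t)^2)
               (fun t => dxi t * w t * dxi t) xi psix p2 /\
       pairing (fun x t => alpha0 x t * (ua - u0 x t))
               (fun t => (ua - dxi t) * w t) xi psi p3 /\
       IntR (fun x => aI x * uI x * psi x 0) q /\
       p1 + p2 + mu * p3 = - q).

Definition delta_shock_solution (mu ua am um ap up : R)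
  (ul ur w xi : R -> R) : Prop :=
  exists dxi : R -> R,
    (forall t, 0 < t -> derivable_pt_lim xi t (dxi t)) /\
    weak_solution mu ua (riemann am ap) (riemann um up)
      (piecewise xi (fun _ => am) (fun _ => ap)) (piecewise xi ul ur)
      w xi dxi /\
    (forall t, 0 < t -> ur t < dxi t < ul t).

(* Main.v *)
Require Import Defs.
From Stdlib Require Import Reals Lra FunctionalExtensionality.
From Coquelicot Require Import Coquelicot.
Open Scope R_scope.

Lemma rint_rel_of f a b v : is_RInt f a b v -> RInt_rel f a b v.
Proof.
  intros H. assert (He : ex_RInt f a b) by (exists v; exact H).
  exists (ex_RInt_Reals_0 f a b He). rewrite <- RInt_Reals. now apply is_RInt_unique.
Qed.

Lemma of_rint_rel f a b v : RInt_rel f a b v -> is_RInt f a b v.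
Proof.
  intros [pr Hpr]. assert (He := ex_RInt_Reals_1 f a b pr).
  rewrite <- Hpr, <- (RInt_Reals f a b pr). exact (RInt_correct (V:=R_CompleteNormedModule) f a b He).
Qed.

Lemma cont_eps (f : R -> R) x :
  (forall eps, 0 < eps -> exists d, 0 < d /\ forall y, Rabs (y - x) < d -> Rabs (f y - f x) < eps)
  -> continuous f x.
Proof.
  intros H. apply continuity_pt_filterlim. apply continuity_pt_locally.
  intros eps. destruct (H eps (cond_pos eps)) as [d [Hd Hy]].
  exists (mkposreal d Hd). intros y Hb. apply Hy. exact Hb.
Qed.

Lemma eps_cont (f : R -> R) x : continuous f x ->
  forall eps, 0 < eps -> exists d, 0 < d /\ forall y, Rabs (y - x) < d -> Rabs (f y - f x) < eps.
Proof.
  intros H0 eps He. assert (H1 : continuity_pt f x) by (apply continuity_pt_filterlim; exact H0).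
  assert (H := proj1 (continuity_pt_locally f x) H1). destruct (H (mkposreal eps He)) as [d Hd].
  exists d. split. apply cond_pos. intros y Hy. apply Hd. exact Hy.
Qed.

Lemma cont2_comp (h : R -> R -> R) (a b : R -> R) (t : R) : cont2 h -> continuous a t -> continuous b t ->
  continuous (fun s => h (a s) (b s)) t.
Proof.
  intros Hh Ha Hb. apply cont_eps. intros eps He.
  destruct (Hh (a t) (b t) eps He) as [d [Hd Hp]].
  destruct (eps_cont _ _ Ha d Hd) as [d1 [Hd1 H1]].
  destruct (eps_cont _ _ Hb d Hd) as [d2 [Hd2 H2]].
  exists (Rmin d1 d2). split. apply Rmin_pos; auto.
  intros y Hy. apply Hp. apply H1. eapply Rlt_le_trans; [exact Hy| apply Rmin_l].
  apply H2. eapply Rlt_le_trans; [exact Hy| apply Rmin_r].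
Qed.

Lemma eq_eps a b : (forall eps, 0 < eps -> Rabs (a - b) < eps) -> a = b.
Proof.
  intros H. destruct (Req_dec a b) as [|Hn]; auto.
  assert (0 < Rabs (a - b)) by (apply Rabs_pos_lt; lra).
  specialize (H _ H0). lra.
Qed.

Lemma deq (f : R -> R) (x l1 l2 : R) : is_derive f x l1 -> l1 = l2 -> is_derive f x l2.
Proof. intros H ->; exact H. Qed.

Lemma d_mult (f g : R -> R) (x a b : R) : is_derive f x a -> is_derive g x b ->
  is_derive (fun t => f t * g t) x (a * g x + f x * b).
Proof. intros Hf Hg. apply (is_derive_mult f g x a b Hf Hg). intros; apply Rmult_comm. Qed.

Lemma d_plus (f g : R -> R) (x a b : R) : is_derive f x a -> is_derive g x b ->
  is_derive (fun t => f t + g t) x (a + b).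
Proof. intros Hf Hg. apply (is_derive_plus f g x a b Hf Hg). Qed.

Lemma d_minus (f g : R -> R) (x a b : R) : is_derive f x a -> is_derive g x b ->
  is_derive (fun t => f t - g t) x (a - b).
Proof. intros Hf Hg. apply (is_derive_minus f g x a b Hf Hg). Qed.

Lemma d_const (c x : R) : is_derive (fun _ => c) x 0.
Proof. apply (is_derive_const c x). Qed.

Lemma d_scal (c : R) (f : R -> R) (x a : R) : is_derive f x a -> is_derive (fun t => c * f t) x (c * a).
Proof. intros H. eapply deq. apply (d_mult (fun _ => c) f x 0 a (d_const c x) H). ring. Qed.

Lemma c_mult (f g : R -> R) (x : R) : continuous f x -> continuous g x -> continuous (fun t => f t * g t) x.
Proof. intros; apply (continuous_mult f g x); auto. Qed.
Lemma c_plus (f g : R -> R) (x : R) : continuous f x -> continuous g x -> continuous (fun t => f t + g t) x.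
Proof. intros; apply (continuous_plus f g x); auto. Qed.
Lemma c_minus (f g : R -> R) (x : R) : continuous f x -> continuous g x -> continuous (fun t => f t - g t) x.
Proof. intros; apply (continuous_minus f g x); auto. Qed.
Lemma c_const (c x : R) : continuous (fun _ => c) x.
Proof. apply continuous_const. Qed.

Lemma RInt_zero_fun (f : R -> R) a b : (forall x, f x = 0) -> RInt f a b = 0.
Proof.
  intros H. rewrite (RInt_ext f (fun _ => 0)). rewrite RInt_const.
  unfold scal; simpl; unfold mult; simpl; ring. intros; apply H.
Qed.

Lemma ex_RInt_c (f : R -> R) (a b : R) : (forall x : R, continuous f x) -> ex_RInt f a b.
Proof. intros H. apply (ex_RInt_continuous (V:=R_CompleteNormedModule)). intros; apply H. Qed.

Lemma RInt_c (f : R -> R) (a b : R) : (forall x : R, continuous f x) -> is_RInt f a b (RInt f a b).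
Proof. intros H. apply (RInt_correct (V:=R_CompleteNormedModule)). now apply ex_RInt_c. Qed.

Lemma derive_cont (f : R -> R) (x l : R) : is_derive f x l -> continuous f x.
Proof. intros H. apply (ex_derive_continuous (K:=R_AbsRing) (V:=R_NormedModule)). exists l; exact H. Qed.

Lemma mvt_any (g g' : R -> R) (u v : R) : (forall c, derivable_pt_lim g c (g' c)) ->
  exists c, g v - g u = g' c * (v - u) /\ Rabs (c - u) <= Rabs (v - u).
Proof.
  intros Hd. destruct (total_order_T u v) as [[Hlt|Heq]|Hgt].
  - destruct (MVT_cor2 g g' u v Hlt (fun c _ => Hd c)) as [c [E Hc]].
    exists c. split; auto. rewrite !Rabs_right by lra. lra.
  - subst. exists v. split. ring. rewrite Rminus_diag, Rabs_R0. lra.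
  - destruct (MVT_cor2 g g' v u Hgt (fun c _ => Hd c)) as [c [E Hc]].
    exists c. split. lra. rewrite (Rabs_left (v - u)) by lra.
    rewrite Rabs_left by lra. lra.
Qed.

Lemma chain2 (h hx ht : R -> R -> R) (b : R -> R) (t db : R) :
  partial_x h hx -> partial_t h ht -> cont2 hx -> cont2 ht ->
  derivable_pt_lim b t db ->
  derivable_pt_lim (fun s => h (b s) s) t (hx (b t) t * db + ht (b t) t).
Proof.
  intros Hpx Hpt Hcx Hct Hb eps Heps.
  set (X := hx (b t) t). set (Y := ht (b t) t).
  set (D := Rabs db + Rabs X + 3).
  assert (HD : 0 < D) by (unfold D; pose proof (Rabs_pos db); pose proof (Rabs_pos X); lra).
  set (e1 := Rmin 1 (eps / D)).
  assert (He1 : 0 < e1) by (apply Rmin_pos; [lra| apply Rdiv_lt_0_compat; lra]).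
  assert (He1a : e1 <= 1) by apply Rmin_l.
  assert (He1b : e1 * D <= eps).
  { assert (e1 <= eps / D) by apply Rmin_r.
    apply Rmult_le_compat_r with (r := D) in H; [|lra].
    unfold Rdiv in H. rewrite Rmult_assoc, Rinv_l, Rmult_1_r in H; lra. }
  destruct (Hcx (b t) t e1 He1) as [d1 [Hd1 Hx1]].
  destruct (Hct (b t) t e1 He1) as [d2 [Hd2 Ht1]].
  assert (Hbc : continuous b t).
  { apply (derive_cont _ _ db). apply is_derive_Reals. exact Hb. }
  destruct (eps_cont _ _ Hbc d1 Hd1) as [d3 [Hd3 Hb3]].
  destruct (Hb e1 He1) as [d4 Hb4].
  assert (Hdd : 0 < Rmin (Rmin d1 d2) (Rmin d3 d4)).
  { repeat apply Rmin_pos; auto. apply cond_pos. }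
  exists (mkposreal _ Hdd). intros k Hk0 Hk. simpl in Hk.
  assert (Hk1 : Rabs k < d1) by (eapply Rlt_le_trans; [exact Hk|]; eapply Rle_trans; [apply Rmin_l|apply Rmin_l]).
  assert (Hk2 : Rabs k < d2) by (eapply Rlt_le_trans; [exact Hk|]; eapply Rle_trans; [apply Rmin_l|apply Rmin_r]).
  assert (Hk3 : Rabs k < d3) by (eapply Rlt_le_trans; [exact Hk|]; eapply Rle_trans; [apply Rmin_r|apply Rmin_l]).
  assert (Hk4 : Rabs k < d4) by (eapply Rlt_le_trans; [exact Hk|]; eapply Rle_trans; [apply Rmin_r|apply Rmin_r]).
  destruct (mvt_any (fun y => h y (t + k)) (fun y => hx y (t + k)) (b t) (b (t + k)))
    as [c [E1 Hc]].
  { intros c. apply Hpx. }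
  destruct (mvt_any (fun s => h (b t) s) (fun s => ht (b t) s) t (t + k)) as [c' [E2 Hc']].
  { intros c0. apply Hpt. }
  simpl in E1, E2.
  set (q := (b (t + k) - b t) / k).
  assert (Hq : Rabs (q - db) < e1) by (apply Hb4; auto).
  assert (Hbk : Rabs (b (t + k) - b t) < d1) by (apply Hb3; replace (t + k - t) with k by ring; exact Hk3).
  assert (HA : Rabs (hx c (t + k) - X) < e1).
  { apply Hx1. lra. replace (t + k - t) with k by ring; exact Hk1. }
  assert (HB : Rabs (ht (b t) c' - Y) < e1).
  { apply Ht1. rewrite Rminus_diag, Rabs_R0; lra. replace (t + k - t) with k in Hc' by ring. lra. }
  assert (Equot : (h (b (t + k)) (t + k) - h (b t) t) / k =
     hx c (t + k) * q + ht (b t) c').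
  { unfold q. replace (h (b (t + k)) (t + k) - h (b t) t) with
      ((h (b (t + k)) (t + k) - h (b t) (t + k)) + (h (b t) (t + k) - h (b t) t)) by ring.
    rewrite E1, E2. field. exact Hk0. }
  rewrite Equot.
  replace (hx c (t + k) * q + ht (b t) c' - (X * db + Y)) with
    ((hx c (t + k) - X) * q + X * (q - db) + (ht (b t) c' - Y)) by (unfold X, Y; ring).
  set (A := hx c (t + k) - X) in *. set (B := ht (b t) c' - Y) in *.
  assert (HQ : Rabs q <= Rabs db + 1).
  { replace q with (db + (q - db)) by ring. eapply Rle_trans. apply Rabs_triang. lra. }
  eapply Rle_lt_trans. apply Rabs_triang.
  eapply Rle_lt_trans. apply Rplus_le_compat_r. apply Rabs_triang.
  rewrite !Rabs_mult.
  assert (Rabs A * Rabs q <= e1 * (Rabs db + 1)).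
  { apply Rmult_le_compat; try apply Rabs_pos; lra. }
  assert (Rabs X * Rabs (q - db) <= Rabs X * e1).
  { apply Rmult_le_compat_l. apply Rabs_pos. lra. }
  unfold D in He1b. nra.
Qed.

Lemma cont2_x (h : R -> R -> R) (x y : R) : cont2 h -> continuous (fun z => h z y) x.
Proof. intros H. apply (cont2_comp h (fun z => z) (fun _ => y) x H). apply continuous_id. apply continuous_const. Qed.

Lemma cont2_t (h : R -> R -> R) (x y : R) : cont2 h -> continuous (fun z => h x z) y.
Proof. intros H. apply (cont2_comp h (fun _ => x) (fun z => z) y H). apply continuous_const. apply continuous_id. Qed.

Lemma pt_derive (h ht : R -> R -> R) : partial_t h ht -> forall u v, Derive (fun z => h v z) u = ht v u.
Proof. intros H u v. apply is_derive_unique. apply is_derive_Reals. apply H. Qed.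

Lemma cont2_swapD (h ht : R -> R -> R) : cont2 ht -> partial_t h ht ->
  forall u0 v0, continuity_2d_pt (fun u v => Derive (fun z => h v z) u) u0 v0.
Proof.
  intros Hc Hp u0 v0. apply continuity_2d_pt_ext with (f := fun u v => ht v u).
  { intros; symmetry; apply pt_derive; auto. }
  intros eps. destruct (Hc v0 u0 eps (cond_pos eps)) as [d [Hd H]].
  exists (mkposreal d Hd). intros u v Hu Hv. apply H; auto.
Qed.

Lemma dparam (h ht : R -> R -> R) (c : R) (b : R -> R) (t db : R) :
  cont2 h -> cont2 ht -> partial_t h ht -> is_derive b t db ->
  is_derive (fun s => RInt (fun x => h x s) c (b s)) t
    (RInt (fun x => ht x t) c (b t) + h (b t) t * db).
Proof.
  intros Hc Hct Hp Hb.
  assert (Hex : forall y a1 a2, ex_RInt (fun x => h x y) a1 a2).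
  { intros. apply ex_RInt_c. intros; apply cont2_x; auto. }
  eapply deq.
  apply (is_derive_RInt_param_bound_comp_aux3 (fun y x => h x y) c b t db).
  - apply filter_forall. intros; apply Hex.
  - exists (mkposreal 1 Rlt_0_1). apply filter_forall. intros; apply Hex.
  - exact Hb.
  - exists (mkposreal 1 Rlt_0_1). apply filter_forall. intros x0 x _.
    exists (ht x x0). apply is_derive_Reals. apply Hp.
  - intros; apply (cont2_swapD h ht); auto.
  - exists (mkposreal 1 Rlt_0_1). intros; apply (cont2_swapD h ht); auto.
  - apply continuity_pt_filterlim. apply cont2_x; auto.
  - f_equal. apply RInt_ext. intros; apply pt_derive; auto.
Qed.

Lemma RInt_swap' (f : R -> R) (a b : R) : (forall x, continuous f x) -> RInt f b a = - RInt f a b.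
Proof.
  intros H. rewrite <- (opp_RInt_swap (V:=R_CompleteNormedModule) f a b). reflexivity.
  apply ex_RInt_c; auto.
Qed.

Lemma dparamR (h ht : R -> R -> R) (c : R) (b : R -> R) (t db : R) :
  cont2 h -> cont2 ht -> partial_t h ht -> is_derive b t db ->
  is_derive (fun s => RInt (fun x => h x s) (b s) c) t
    (RInt (fun x => ht x t) (b t) c - h (b t) t * db).
Proof.
  intros Hc Hct Hp Hb.
  assert (E : forall s : R, -1 * RInt (fun x => h x s) c (b s) = RInt (fun x => h x s) (b s) c).
  { intros s. rewrite (RInt_swap' _ c (b s)). ring. intros; apply cont2_x; auto. }
  apply is_derive_ext with (fun s => -1 * RInt (fun x => h x s) c (b s)). exact E.
  eapply deq. apply d_scal. apply dparam; eauto.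
  rewrite (RInt_swap' _ c (b t)). ring. intros; apply cont2_x; auto.
Qed.

Lemma derive_max (f : R -> R) (t l : R) : 0 < t -> derivable_pt_lim f t l ->
  is_derive (fun s => f (Rmax s 0)) t l.
Proof.
  intros Ht H. apply is_derive_ext_loc with f.
  - exists (mkposreal t Ht). intros y Hy. simpl in Hy. unfold ball in Hy; simpl in Hy.
    unfold AbsRing_ball, abs, minus, plus, opp in Hy; simpl in Hy.
    apply Rabs_def2 in Hy. rewrite Rmax_left; auto. lra.
  - apply is_derive_Reals; auto.
Qed.

Lemma locally_R (P : R -> Prop) (x : R) :
  (exists d, 0 < d /\ forall y, Rabs (y - x) < d -> P y) -> locally x P.
Proof. intros [d [Hd H]]. exists (mkposreal d Hd). intros y Hy. apply H. exact Hy. Qed.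

Lemma cont_max (f f' : R -> R) : (forall t, 0 <= t -> deriv_nonneg f t (f' t)) ->
  forall t, continuous (fun s => f (Rmax s 0)) t.
Proof.
  intros H t. destruct (total_order_T t 0) as [[Hlt|Heq]|Hgt].
  - apply continuous_ext_loc with (fun _ => f 0).
    + apply locally_R. exists (- t). split. lra. intros y Hy.
      rewrite Rmax_right; auto. apply Rabs_def2 in Hy. lra.
    + apply continuous_const.
  - subst. apply cont_eps. intros eps Heps.
    destruct (proj2 (H 0 (Rle_refl 0)) eq_refl 1 Rlt_0_1) as [d [Hd Hq]].
    set (l := f' 0) in *.
    assert (Hl : 0 < Rabs l + 1) by (pose proof (Rabs_pos l); lra).
    exists (Rmin d (eps / (Rabs l + 1))). split.
    { apply Rmin_pos; auto. apply Rdiv_lt_0_compat; lra. }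
    intros y Hy. rewrite (Rmax_left 0 0) by lra. rewrite Rminus_0_r in Hy.
    destruct (Rle_lt_dec y 0) as [Hy0|Hy0].
    + rewrite Rmax_right by lra. rewrite Rminus_diag, Rabs_R0. lra.
    + rewrite Rmax_left by lra.
      assert (Hy1 : y < d) by (rewrite Rabs_right in Hy by lra; eapply Rlt_le_trans; [exact Hy| apply Rmin_l]).
      assert (Hy2 : y < eps / (Rabs l + 1)) by (rewrite Rabs_right in Hy by lra; eapply Rlt_le_trans; [exact Hy| apply Rmin_r]).
      specialize (Hq y (conj Hy0 Hy1)).
      assert (E : f y - f 0 = y * ((f y - f 0) / y)) by (field; lra).
      rewrite E, Rabs_mult, (Rabs_right y) by lra.
      assert (Rabs ((f y - f 0) / y) <= Rabs l + 1).
      { replace ((f y - f 0) / y) with (l + ((f y - f 0) / y - l)) by ring.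
        eapply Rle_trans. apply Rabs_triang. lra. }
      apply Rmult_lt_compat_r with (r := Rabs l + 1) in Hy2; auto.
      unfold Rdiv in Hy2. rewrite Rmult_assoc, Rinv_l, Rmult_1_r in Hy2 by lra.
      nra.
  - apply continuous_ext_loc with f.
    + apply locally_R. exists t. split. lra. intros y Hy.
      rewrite Rmax_left; auto. apply Rabs_def2 in Hy. lra.
    + apply (derive_cont f t (f' t)). apply is_derive_Reals. apply (proj1 (H t (Rlt_le _ _ Hgt))). exact Hgt.
Qed.

Lemma ftc0 (Phi g : R -> R) (T : R) : 0 < T -> (forall t, continuous g t) ->
  continuous Phi 0 -> (forall t, 0 < t <= T -> is_derive Phi t (g t)) ->
  is_RInt g 0 T (Phi T - Phi 0).
Proof.
  intros HT Hg HP Hd.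
  assert (H1 : forall s, 0 < s <= T -> RInt g s T + Phi s = Phi T).
  { intros s Hs. assert (Hi : is_RInt g s T (minus (Phi T) (Phi s))).
    { apply (is_RInt_derive (V:=R_CompleteNormedModule)).
      - intros x Hx. apply Hd. rewrite Rmin_left in Hx by lra. rewrite Rmax_right in Hx by lra. lra.
      - intros; apply Hg. }
    apply (is_RInt_unique (V:=R_CompleteNormedModule)) in Hi. rewrite Hi. unfold minus, plus, opp; simpl. ring. }
  assert (H2 : continuous (fun s => RInt g s T + Phi s) 0).
  { apply c_plus; auto. apply (derive_cont _ _ (opp (g 0))).
    apply (is_derive_RInt' (V:=R_NormedModule) g (fun s => RInt g s T) 0 T).
    - apply filter_forall. intros; apply RInt_c; auto.
    - apply Hg. }
  assert (H3 : RInt g 0 T + Phi 0 = Phi T).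
  { symmetry. apply eq_eps. intros eps Heps.
    destruct (eps_cont _ _ H2 eps Heps) as [d [Hd0 Hdd]].
    set (s := Rmin (d / 2) T).
    assert (Hs : 0 < s <= T) by (split; [apply Rmin_pos; lra| apply Rmin_r]).
    rewrite <- (H1 s Hs). apply Hdd. rewrite Rminus_0_r, Rabs_right by lra.
    assert (s <= d / 2) by apply Rmin_l. lra. }
  replace (Phi T - Phi 0) with (RInt g 0 T) by lra. apply RInt_c; auto.
Qed.

Lemma is_RInt_val (f : R -> R) (a b l1 l2 : R) : is_RInt f a b l1 -> l1 = l2 -> is_RInt f a b l2.
Proof. intros H ->; exact H. Qed.

Lemma is_RInt_zero (f : R -> R) (a b : R) : a <= b -> (forall x, a < x < b -> f x = 0) -> is_RInt f a b 0.
Proof.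
  intros Hab H. apply is_RInt_ext with (fun _ => 0).
  { intros x Hx. rewrite Rmin_left, Rmax_right in Hx by lra. symmetry; apply H; lra. }
  eapply is_RInt_val. apply (is_RInt_const (V:=R_NormedModule)). unfold scal; simpl; unfold mult; simpl; ring.
Qed.

Lemma Int0inf_of (g ge : R -> R) (T : R) : 0 <= T -> (forall t, 0 <= t -> g t = ge t) ->
  (forall t, continuous ge t) -> (forall t, T <= t -> ge t = 0) -> Int0inf g (RInt ge 0 T).
Proof.
  intros HT Heq Hc Hz. exists T. split; auto. intros S HS. apply rint_rel_of.
  apply is_RInt_ext with ge.
  { intros x Hx. rewrite Rmin_left in Hx by lra. symmetry; apply Heq; lra. }
  eapply is_RInt_val. apply (is_RInt_Chasles (V:=R_NormedModule) ge 0 T S).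
  apply RInt_c; auto. apply is_RInt_zero; auto. intros; apply Hz; lra.
  unfold plus; simpl; ring.
Qed.

Lemma IntR_split (f h : R -> R) (y p q L : R) : 0 < L -> (forall x, L < Rabs x -> h x = 0) ->
  (forall x, continuous h x) ->
  (forall x, f x = if Rlt_dec x y then p * h x else q * h x) ->
  IntR f (p * RInt h (-(L+1)) y + q * RInt h y (L+1)).
Proof.
  intros HL Hz Hc Hf. exists (L + 1 + Rabs y). intros M HM. apply rint_rel_of.
  assert (Hy := Rabs_pos y). assert (Hy1 := Rle_abs y). assert (Hy2 := Rle_abs (- y)).
  rewrite Rabs_Ropp in Hy2.
  assert (I1 : is_RInt h (-M) y (RInt h (-(L+1)) y)).
  { eapply is_RInt_val. apply (is_RInt_Chasles (V:=R_NormedModule) h (-M) (-(L+1)) y).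
    apply is_RInt_zero with (a := -M) (b := -(L+1)). lra.
    intros x Hx. apply Hz. rewrite Rabs_left by lra. lra.
    apply RInt_c; auto. unfold plus; simpl; ring. }
  assert (I2 : is_RInt h y M (RInt h y (L+1))).
  { eapply is_RInt_val. apply (is_RInt_Chasles (V:=R_NormedModule) h y (L+1) M).
    apply RInt_c; auto.
    apply is_RInt_zero with (a := L+1) (b := M). lra.
    intros x Hx. apply Hz. rewrite Rabs_right by lra. lra.
    unfold plus; simpl; ring. }
  assert (J1 : is_RInt f (-M) y (p * RInt h (-(L+1)) y)).
  { apply is_RInt_ext with (fun x => p * h x).
    { intros x Hx. rewrite Rmin_left, Rmax_right in Hx by lra. rewrite Hf.
      destruct (Rlt_dec x y); [reflexivity| lra]. }
    exact (is_RInt_scal (V:=R_NormedModule) h (-M) y p _ I1). }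
  assert (J2 : is_RInt f y M (q * RInt h y (L+1))).
  { apply is_RInt_ext with (fun x => q * h x).
    { intros x Hx. rewrite Rmin_left, Rmax_right in Hx by lra. rewrite Hf.
      destruct (Rlt_dec x y); [lra| reflexivity]. }
    exact (is_RInt_scal (V:=R_NormedModule) h y M q _ I2). }
  exact (is_RInt_Chasles (V:=R_NormedModule) f (-M) y M _ _ J1 J2).
Qed.

Lemma ftc_x (h hx : R -> R -> R) (t a b : R) : partial_x h hx -> cont2 hx ->
  RInt (fun x => hx x t) a b = h b t - h a t.
Proof.
  intros Hp Hc. apply (is_RInt_unique (V:=R_CompleteNormedModule)).
  eapply is_RInt_val. apply (is_RInt_derive (V:=R_CompleteNormedModule) (fun x => h x t)).
  - intros x _. apply is_derive_Reals. apply Hp.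
  - intros x _. apply (cont2_comp hx (fun z => z) (fun _ => t) x Hc). apply continuous_id. apply continuous_const.
  - unfold minus, plus, opp; simpl. ring.
Qed.

Lemma test_facts psi psix psit : test_fun psi -> partial_x psi psix -> partial_t psi psit ->
  cont2 psi /\ cont2 psix /\ cont2 psit /\ (exists psitt, partial_t psit psitt /\ cont2 psitt) /\
  exists L, 0 < L /\ forall x t, (L < Rabs x \/ L < Rabs t) ->
     psi x t = 0 /\ psix x t = 0 /\ psit x t = 0.
Proof.
  intros [Hs [L [HL Hsup]]] Hpx Hpt.
  destruct Hs as [Hc [fx [Hfx Hsx]] [ft [Hft Hst]]].
  assert (fx = psix).
  { extensionality x; extensionality t. exact (uniqueness_limite _ _ _ _ (Hfx x t) (Hpx x t)). }
  subst fx.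
  assert (ft = psit).
  { extensionality x; extensionality t. exact (uniqueness_limite _ _ _ _ (Hft x t) (Hpt x t)). }
  subst ft.
  destruct Hsx as [Hcx _ _]. destruct Hst as [Hct _ [ftt [Hftt Hstt]]]. destruct Hstt as [Hctt _ _].
  split; [auto|split; [auto| split; [auto| split]]].
  { exists ftt; auto. }
  exists L. split; auto. intros x t Hxt.
  assert (Hfar : forall y s, Rabs (y - x) < Rabs x - L -> Rabs (s - t) < Rabs t - L -> False ->
     True) by auto.
  split; [apply Hsup; auto| split].
  - apply uniqueness_limite with (f := fun y => psi y t) (x := x). apply Hpx.
    apply is_derive_Reals. apply is_derive_ext_loc with (fun _ => 0). 2: apply (is_derive_const (K:=R_AbsRing) (V:=R_NormedModule)).
    destruct Hxt as [Hx|Ht].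
    + apply locally_R. exists (Rabs x - L). split. lra. intros y Hy. symmetry. apply Hsup. left.
      assert (Rabs x <= Rabs y + Rabs (x - y)).
      { replace x with (y + (x - y)) at 1 by ring. apply Rabs_triang. }
      rewrite Rabs_minus_sym in H. lra.
    + apply filter_forall. intros y. symmetry. apply Hsup. right; auto.
  - apply uniqueness_limite with (f := fun s => psi x s) (x := t). apply Hpt.
    apply is_derive_Reals. apply is_derive_ext_loc with (fun _ => 0). 2: apply (is_derive_const (K:=R_AbsRing) (V:=R_NormedModule)).
    destruct Hxt as [Hx|Ht].
    + apply filter_forall. intros y. symmetry. apply Hsup. left; auto.
    + apply locally_R. exists (Rabs t - L). split. lra. intros y Hy. symmetry. apply Hsup. right.
      assert (Rabs t <= Rabs y + Rabs (t - y)).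
      { replace t with (y + (t - y)) at 1 by ring. apply Rabs_triang. }
      rewrite Rabs_minus_sym in H. lra.
Qed.

Lemma is_RInt_plusR (f g : R -> R) (a b u v : R) : is_RInt f a b u -> is_RInt g a b v ->
  is_RInt (fun t => f t + g t) a b (u + v).
Proof. intros; apply (is_RInt_plus (V:=R_NormedModule)); auto. Qed.

Lemma is_RInt_scalR (f : R -> R) (a b c u : R) : is_RInt f a b u ->
  is_RInt (fun t => c * f t) a b (c * u).
Proof. intros H; exact (is_RInt_scal (V:=R_NormedModule) f a b c u H). Qed.

Lemma RInt_uniqR (f : R -> R) (a b u : R) : is_RInt f a b u -> RInt f a b = u.
Proof. intros H; apply (is_RInt_unique (V:=R_CompleteNormedModule)); auto. Qed.

Theorem mainTheorem10 :
  forall (mu ua am ap um up : R),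
    0 < mu -> 0 < am -> 0 < ap -> up < um ->
    let ul := fun t => ua + (um - ua) * exp (- mu * t) in
    let ur := fun t => ua + (up - ua) * exp (- mu * t) in
    forall (w sig : R -> R),
      C1_nonneg w -> C1_nonneg sig ->
      (forall t, 0 <= t -> deriv_nonneg w t
          ((ap - am) * sig t - (ap * ur t - am * ul t))) ->
      (forall t, 0 <= t -> deriv_nonneg (fun s => w s * sig s) t
          ((ap * ur t - am * ul t) * sig t
           - (ap * (ur t)^2 - am * (ul t)^2)
           + mu * (ua - sig t) * w t)) ->
      w 0 = 0 ->
      (forall t, 0 <= t -> ur t < sig t < ul t) ->
      forall xi : R -> R,
        (forall t, 0 <= t -> RInt_rel sig 0 t (xi t)) ->
        delta_shock_solution mu ua am um ap up ul ur w xi.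
Proof.
  intros mu ua am ap um up Hmu Ham Hap Hu ul ur w sig Cw Csig H1 H2 Hw0 Hent xi Hxi.
  destruct Csig as [sig' [Hsig' _]].
  pose (se := fun t => sig (Rmax t 0)).
  assert (Hse : forall t, continuous se t) by (apply (cont_max sig sig' Hsig')).
  pose (xe := (fun t => RInt se 0 t) : R -> R).
  assert (Hxe : forall t, is_derive xe t (se t)).
  { intros t. apply (is_derive_RInt (V:=R_NormedModule) se xe 0 t).
    apply filter_forall. intros; apply RInt_c; auto. apply Hse. }
  assert (Hxc : forall t, continuous xe t) by (intros; eapply derive_cont; apply Hxe).
  assert (Hxixe : forall t, 0 <= t -> xi t = xe t).
  { intros t Ht. symmetry. apply (is_RInt_unique (V:=R_CompleteNormedModule)).
    apply is_RInt_ext with sig.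
    { intros x Hx. rewrite Rmin_left in Hx by lra. unfold se. rewrite Rmax_left by lra. reflexivity. }
    apply of_rint_rel. apply Hxi; auto. }
  assert (Hxe0 : xe 0 = 0).
  { unfold xe. rewrite RInt_point. reflexivity. }
  pose (we := fun t => w (Rmax t 0)).
  assert (Hwe : forall t, continuous we t) by (apply (cont_max w _ H1)).
  assert (Hwe0 : we 0 = 0) by (unfold we; rewrite Rmax_left by lra; auto).
  assert (Hdwe : forall t, 0 < t -> is_derive we t ((ap - am) * se t - (ap * ur t - am * ul t))).
  { intros t Ht. unfold se. rewrite Rmax_left by lra. apply derive_max; auto.
    apply (proj1 (H1 t (Rlt_le _ _ Ht))); auto. }
  assert (Hdpe : forall t, 0 < t -> is_derive (fun s => we s * se s) t
     ((ap * ur t - am * ul t) * se t - (ap * (ur t)^2 - am * (ul t)^2) + mu * (ua - se t) * we t)).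
  { intros t Ht. unfold se, we. rewrite Rmax_left by lra.
    apply (derive_max (fun s => w s * sig s)); auto.
    apply (proj1 (H2 t (Rlt_le _ _ Ht))); auto. }
  assert (Hul : forall t, is_derive ul t (mu * (ua - ul t))).
  { intros t. unfold ul. auto_derive. auto. ring. }
  assert (Hur : forall t, is_derive ur t (mu * (ua - ur t))).
  { intros t. unfold ur. auto_derive. auto. ring. }
  assert (Hulc : forall t, continuous ul t) by (intros; eapply derive_cont; apply Hul).
  assert (Hurc : forall t, continuous ur t) by (intros; eapply derive_cont; apply Hur).
  assert (Hul0 : ul 0 = um) by (unfold ul; rewrite Rmult_0_r, exp_0; ring).
  assert (Hur0 : ur 0 = up) by (unfold ur; rewrite Rmult_0_r, exp_0; ring).
  exists sig. split; [|split].
  { intros t Ht. apply is_derive_Reals. apply is_derive_ext_loc with xe.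
    - apply locally_R. exists t. split; auto. intros y Hy. apply Rabs_def2 in Hy. symmetry; apply Hxixe; lra.
    - replace (sig t) with (se t) by (unfold se; rewrite Rmax_left by lra; auto). apply Hxe. }
  2: { intros t Ht. apply Hent. lra. }
  intros psi psix psit Htest Hpx Hpt.
  destruct (test_facts psi psix psit Htest Hpx Hpt) as (Hc & Hcx & Hct & [psitt [Hptt Hctt]] & [L [HL Hsup]]).
  assert (Hz : forall x t, L + 1 <= t -> psi x t = 0 /\ psix x t = 0 /\ psit x t = 0).
  { intros x t Ht. apply Hsup. right. rewrite Rabs_right by lra. lra. }
  pose (T := L + 1).
  assert (HT : 0 < T) by (unfold T; lra).
  pose (A := (fun t => RInt (fun x => psi x t) (-(L+1)) (xe t)) : R -> R).
  pose (B := (fun t => RInt (fun x => psi x t) (xe t) (L+1)) : R -> R).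
  pose (At := (fun t => RInt (fun x => psit x t) (-(L+1)) (xe t)) : R -> R).
  pose (Bt := (fun t => RInt (fun x => psit x t) (xe t) (L+1)) : R -> R).
  pose (Y := fun t => psi (xe t) t).
  pose (Yt := fun t => psit (xe t) t).
  pose (Yx := fun t => psix (xe t) t).
  assert (dA : forall t, is_derive A t (At t + Y t * se t)).
  { intros t. apply (dparam psi psit); auto. }
  assert (dB : forall t, is_derive B t (Bt t - Y t * se t)).
  { intros t. apply (dparamR psi psit); auto. }
  assert (dY : forall t, is_derive Y t (Yx t * se t + Yt t)).
  { intros t. apply is_derive_Reals. apply (chain2 psi psix psit xe t (se t)); auto.
    apply is_derive_Reals; auto. }
  assert (cA : forall t, continuous A t) by (intros; eapply derive_cont; apply dA).
  assert (cB : forall t, continuous B t) by (intros; eapply derive_cont; apply dB).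
  assert (cY : forall t, continuous Y t) by (intros; eapply derive_cont; apply dY).
  assert (cAt : forall t, continuous At t).
  { intros t. eapply derive_cont. apply (dparam psit psitt); auto. }
  assert (cBt : forall t, continuous Bt t).
  { intros t. eapply derive_cont. apply (dparamR psit psitt); auto. }
  assert (cYt : forall t, continuous Yt t) by (intros; apply cont2_comp; auto; apply continuous_id).
  assert (cYx : forall t, continuous Yx t) by (intros; apply cont2_comp; auto; apply continuous_id).
  assert (zA : forall t, T <= t -> A t = 0).
  { intros t Ht. apply RInt_zero_fun. intros; apply Hz; auto. }
  assert (zB : forall t, T <= t -> B t = 0).
  { intros t Ht. apply RInt_zero_fun. intros; apply Hz; auto. }
  assert (zAt : forall t, T <= t -> At t = 0).
  { intros t Ht. apply RInt_zero_fun. intros; apply Hz; auto. }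
  assert (zBt : forall t, T <= t -> Bt t = 0).
  { intros t Ht. apply RInt_zero_fun. intros; apply Hz; auto. }
  assert (zY : forall t, T <= t -> Y t = 0) by (intros; apply Hz; auto).
  assert (zYt : forall t, T <= t -> Yt t = 0) by (intros; apply Hz; auto).
  assert (zYx : forall t, T <= t -> Yx t = 0) by (intros; apply Hz; auto).
  assert (Hpsix : forall t y, RInt (fun x => psix x t) (-(L+1)) y = psi y t).
  { intros t y. rewrite (ftc_x psi psix); auto.
    assert (HK : L < Rabs (-(L+1))) by (rewrite Rabs_left by lra; lra).
    rewrite (proj1 (Hsup (-(L+1)) t (or_introl HK))). apply Rminus_0_r. }
  assert (Hpsix' : forall t y, RInt (fun x => psix x t) y (L+1) = - psi y t).
  { intros t y. rewrite (ftc_x psi psix); auto.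
    assert (HK : L < Rabs (L+1)) by (rewrite Rabs_right by lra; lra).
    rewrite (proj1 (Hsup (L+1) t (or_introl HK))). apply Rminus_0_l. }
  assert (Hsupx : forall t x, L < Rabs x -> psi x t = 0 /\ psix x t = 0 /\ psit x t = 0).
  { intros; apply Hsup; auto. }
  pose (q := am * RInt (fun x => psi x 0) (-(L+1)) 0 + ap * RInt (fun x => psi x 0) 0 (L+1)).
  assert (Hq : IntR (fun x => riemann am ap x * psi x 0) q).
  { apply IntR_split; auto. intros; apply Hsupx; auto. intros; apply cont2_x; auto.
    intros x. unfold riemann. destruct (Rlt_dec x 0); reflexivity. }
  pose (q2 := am * um * RInt (fun x => psi x 0) (-(L+1)) 0 + ap * up * RInt (fun x => psi x 0) 0 (L+1)).
  assert (Hq2 : IntR (fun x => riemann am ap x * riemann um up x * psi x 0) q2).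
  { apply IntR_split; auto. intros; apply Hsupx; auto. intros; apply cont2_x; auto.
    intros x. unfold riemann. destruct (Rlt_dec x 0); reflexivity. }
  assert (cC : forall c t, continuous (fun _ : R => c) t) by (intros; apply c_const).
  split.
  - pose (g1 := (fun t => am * At t + ap * Bt t) : R -> R).
    pose (g2 := (fun t => we t * Yt t) : R -> R).
    pose (g3 := (fun t => (am * ul t - ap * ur t) * Y t) : R -> R).
    pose (g4 := (fun t => we t * se t * Yx t) : R -> R).
    assert (cg1 : forall t, continuous g1 t) by (intros; unfold g1; apply c_plus; apply c_mult; auto).
    assert (cg2 : forall t, continuous g2 t) by (intros; unfold g2; apply c_mult; auto).
    assert (cg3 : forall t, continuous g3 t) by (intros; unfold g3; apply c_mult; [apply c_minus; apply c_mult; auto| auto]).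
    assert (cg4 : forall t, continuous g4 t) by (intros; unfold g4; apply c_mult; [apply c_mult; auto| auto]).
    assert (zg1 : forall t, T <= t -> g1 t = 0) by (intros; unfold g1; rewrite zAt, zBt by auto; ring).
    assert (zg2 : forall t, T <= t -> g2 t = 0) by (intros; unfold g2; rewrite zYt by auto; ring).
    assert (zg3 : forall t, T <= t -> g3 t = 0) by (intros; unfold g3; rewrite zY by auto; ring).
    assert (zg4 : forall t, T <= t -> g4 t = 0) by (intros; unfold g4; rewrite zYx by auto; ring).
    exists (RInt g1 0 T + RInt g2 0 T), (RInt g3 0 T + RInt g4 0 T), q.
    split; [|split; [|split]].
    + exists (RInt g1 0 T), (RInt g2 0 T). split; [|split; [|reflexivity]].
      * exists g1. split.
        -- intros t Ht. apply (IntR_split _ (fun x => psit x t) (xe t) am ap L); auto.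
           intros; apply Hsupx; auto. intros; apply cont2_x; auto.
           intros x. unfold piecewise. rewrite (Hxixe t Ht). destruct (Rlt_dec x (xe t)); reflexivity.
        -- apply Int0inf_of; auto; lra.
      * apply Int0inf_of; auto. lra. intros t Ht. unfold g2, we, Yt. rewrite Rmax_left by lra.
        rewrite Hxixe; auto.
    + exists (RInt g3 0 T), (RInt g4 0 T). split; [|split; [|reflexivity]].
      * exists g3. split.
        -- intros t Ht.
           assert (HI := IntR_split (fun x => piecewise xi (fun _ => am) (fun _ => ap) x t * piecewise xi ul ur x t * psix x t)
              (fun x => psix x t) (xe t) (am * ul t) (ap * ur t) L HL).
           rewrite Hpsix, Hpsix' in HI.
           replace (g3 t) with (am * ul t * psi (xe t) t + ap * ur t * - psi (xe t) t) by (unfold g3, Y; ring).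
           apply HI. intros; apply Hsupx; auto. intros; apply cont2_x; auto.
           intros x. unfold piecewise. rewrite (Hxixe t Ht). destruct (Rlt_dec x (xe t)); reflexivity.
        -- apply Int0inf_of; auto; lra.
      * apply Int0inf_of; auto. lra. intros t Ht. unfold g4, we, se, Yx. rewrite Rmax_left by lra.
        rewrite Hxixe; auto.
    + exact Hq.
    + pose (Phi := (fun t => am * A t + ap * B t + we t * Y t) : R -> R).
      assert (HF : is_RInt (fun t => g1 t + g2 t + g3 t + g4 t) 0 T (Phi T - Phi 0)).
      { apply ftc0; auto.
        - intros; apply c_plus; [apply c_plus; [apply c_plus|]|]; auto.
        - unfold Phi. apply c_plus; [apply c_plus; apply c_mult; auto| apply c_mult; auto].
        - intros t Ht. eapply deq. unfold Phi. apply d_plus. apply d_plus.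
          apply d_scal; apply dA. apply d_scal; apply dB. apply d_mult. apply Hdwe; lra. apply dY.
          unfold g1, g2, g3, g4. ring. }
      assert (HS : is_RInt (fun t => g1 t + g2 t + g3 t + g4 t) 0 T
                (RInt g1 0 T + RInt g2 0 T + RInt g3 0 T + RInt g4 0 T)).
      { apply is_RInt_plusR; [apply is_RInt_plusR; [apply is_RInt_plusR|]|]; apply RInt_c; auto. }
      apply RInt_uniqR in HF. apply RInt_uniqR in HS. rewrite HS in HF.
      assert (E1 : Phi T = 0) by (unfold Phi; rewrite zA, zB, zY by lra; ring).
      assert (E0 : Phi 0 = q) by (unfold Phi, A, B, Y, q; rewrite Hxe0, Hwe0; ring).
      rewrite E1, E0 in HF. lra.
  - pose (g1 := (fun t => am * ul t * At t + ap * ur t * Bt t) : R -> R).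
    pose (g2 := (fun t => we t * se t * Yt t) : R -> R).
    pose (g3 := (fun t => (am * ul t ^ 2 - ap * ur t ^ 2) * Y t) : R -> R).
    pose (g4 := (fun t => se t * we t * se t * Yx t) : R -> R).
    pose (g5 := (fun t => am * (ua - ul t) * A t + ap * (ua - ur t) * B t) : R -> R).
    pose (g6 := (fun t => (ua - se t) * we t * Y t) : R -> R).
    assert (cul2 : forall t, continuous (fun t => ul t ^ 2) t).
    { intros; apply continuous_ext with (fun t => ul t * ul t). intros; simpl; ring. apply c_mult; auto. }
    assert (cur2 : forall t, continuous (fun t => ur t ^ 2) t).
    { intros; apply continuous_ext with (fun t => ur t * ur t). intros; simpl; ring. apply c_mult; auto. }
    assert (cg1 : forall t, continuous g1 t) by (intros; unfold g1; apply c_plus; apply c_mult; auto; apply c_mult; auto).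
    assert (cg2 : forall t, continuous g2 t) by (intros; unfold g2; apply c_mult; [apply c_mult; auto| auto]).
    assert (cg3 : forall t, continuous g3 t) by (intros; unfold g3; apply c_mult; [apply c_minus; apply c_mult; auto| auto]).
    assert (cg4 : forall t, continuous g4 t) by (intros; unfold g4; apply c_mult; [apply c_mult; [apply c_mult; auto| auto]| auto]).
    assert (cg5 : forall t, continuous g5 t).
    { intros; unfold g5; apply c_plus; apply c_mult; auto; apply c_mult; auto; apply c_minus; auto. }
    assert (cg6 : forall t, continuous g6 t) by (intros; unfold g6; apply c_mult; [apply c_mult; [apply c_minus; auto| auto]| auto]).
    assert (zg1 : forall t, T <= t -> g1 t = 0) by (intros; unfold g1; rewrite zAt, zBt by auto; ring).
    assert (zg2 : forall t, T <= t -> g2 t = 0) by (intros; unfold g2; rewrite zYt by auto; ring).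
    assert (zg3 : forall t, T <= t -> g3 t = 0) by (intros; unfold g3; rewrite zY by auto; ring).
    assert (zg4 : forall t, T <= t -> g4 t = 0) by (intros; unfold g4; rewrite zYx by auto; ring).
    assert (zg5 : forall t, T <= t -> g5 t = 0) by (intros; unfold g5; rewrite zA, zB by auto; ring).
    assert (zg6 : forall t, T <= t -> g6 t = 0) by (intros; unfold g6; rewrite zY by auto; ring).
    exists (RInt g1 0 T + RInt g2 0 T), (RInt g3 0 T + RInt g4 0 T), (RInt g5 0 T + RInt g6 0 T), q2.
    split; [|split; [|split; [|split]]].
    + exists (RInt g1 0 T), (RInt g2 0 T). split; [|split; [|reflexivity]].
      * exists g1. split.
        -- intros t Ht. apply (IntR_split _ (fun x => psit x t) (xe t) (am * ul t) (ap * ur t) L); auto.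
           intros; apply Hsupx; auto. intros; apply cont2_x; auto.
           intros x. unfold piecewise. rewrite (Hxixe t Ht). destruct (Rlt_dec x (xe t)); reflexivity.
        -- apply Int0inf_of; auto; lra.
      * apply Int0inf_of; auto. lra. intros t Ht. unfold g2, we, se, Yt. rewrite Rmax_left by lra.
        rewrite Hxixe; auto.
    + exists (RInt g3 0 T), (RInt g4 0 T). split; [|split; [|reflexivity]].
      * exists g3. split.
        -- intros t Ht.
           assert (HI := IntR_split (fun x => piecewise xi (fun _ => am) (fun _ => ap) x t * (piecewise xi ul ur x t) ^ 2 * psix x t)
              (fun x => psix x t) (xe t) (am * ul t ^ 2) (ap * ur t ^ 2) L HL).
           rewrite Hpsix, Hpsix' in HI.
           replace (g3 t) with (am * ul t ^ 2 * psi (xe t) t + ap * ur t ^ 2 * - psi (xe t) t) by (unfold g3, Y; ring).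
           apply HI. intros; apply Hsupx; auto. intros; apply cont2_x; auto.
           intros x. unfold piecewise. rewrite (Hxixe t Ht). destruct (Rlt_dec x (xe t)); reflexivity.
        -- apply Int0inf_of; auto; lra.
      * apply Int0inf_of; auto. lra. intros t Ht. unfold g4, we, se, Yx. rewrite Rmax_left by lra.
        rewrite Hxixe; auto.
    + exists (RInt g5 0 T), (RInt g6 0 T). split; [|split; [|reflexivity]].
      * exists g5. split.
        -- intros t Ht. apply (IntR_split _ (fun x => psi x t) (xe t) (am * (ua - ul t)) (ap * (ua - ur t)) L); auto.
           intros; apply Hsupx; auto. intros; apply cont2_x; auto.
           intros x. unfold piecewise. rewrite (Hxixe t Ht). destruct (Rlt_dec x (xe t)); reflexivity.
        -- apply Int0inf_of; auto; lra.
      * apply Int0inf_of; auto. lra. intros t Ht. unfold g6, we, se, Y. rewrite Rmax_left by lra.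
        rewrite Hxixe; auto.
    + exact Hq2.
    + pose (Phi := (fun t => am * ul t * A t + ap * ur t * B t + we t * se t * Y t) : R -> R).
      assert (HF : is_RInt (fun t => g1 t + g2 t + g3 t + g4 t + mu * (g5 t + g6 t)) 0 T (Phi T - Phi 0)).
      { apply ftc0; auto.
        - intros; apply c_plus; [apply c_plus; [apply c_plus; [apply c_plus|]|]|]; auto.
          apply c_mult; auto. apply c_plus; auto.
        - unfold Phi. apply c_plus; [apply c_plus; apply c_mult; auto; apply c_mult; auto| apply c_mult; auto].
          apply c_mult; auto.
        - intros t Ht. eapply deq. unfold Phi. apply d_plus. apply d_plus.
          apply d_mult. apply d_scal; apply Hul. apply dA.
          apply d_mult. apply d_scal; apply Hur. apply dB.
          apply d_mult. apply Hdpe; lra. apply dY.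
          unfold g1, g2, g3, g4, g5, g6. ring. }
      assert (HS : is_RInt (fun t => g1 t + g2 t + g3 t + g4 t + mu * (g5 t + g6 t)) 0 T
                (RInt g1 0 T + RInt g2 0 T + RInt g3 0 T + RInt g4 0 T + mu * (RInt g5 0 T + RInt g6 0 T))).
      { apply is_RInt_plusR; [apply is_RInt_plusR; [apply is_RInt_plusR; [apply is_RInt_plusR|]|]|].
        1-4: apply RInt_c; auto.
        apply is_RInt_scalR. apply is_RInt_plusR; apply RInt_c; auto. }
      apply RInt_uniqR in HF. apply RInt_uniqR in HS. rewrite HS in HF.
      assert (E1 : Phi T = 0) by (unfold Phi; rewrite zA, zB, zY by lra; ring).
      assert (E0 : Phi 0 = q2) by (unfold Phi, A, B, Y, q2; rewrite Hxe0, Hwe0, Hul0, Hur0; ring).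
      rewrite E1, E0 in HF. lra.
Qed.
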